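(* For $n\ge 1$, $i\ge 1$, $j\ge 0$, the number of plane trees with $n$ edges, exactly $i$ old leaves and exactly $j$ young leaves is $$\frac{1}{n}\binom{n}{i}\binom{n-i}{j}\binom{n-i-j}{i-1}.$$
   Context: A plane tree is a rooted tree in which the children of each vertex are linearly ordered (left to right). A leaf is a vertex with no children; by convention the tree consisting of a single vertex (no edges) has no leaves. A leaf is an old leaf if it is the leftmost child of its parent, and a young leaf otherwise. *)

(* Defs.v *)
From mathcomp Require Import all_boot.
From Stdlib Require List.
Set Implicit Arguments. Unset Strict Implicit. Unset Printing Implicit Defensive.

Inductive ptree : Type := Node : seq ptree -> ptree.

Fixpoint edges (t : ptree) : nat :=
  match t with Node l => sumn (map (fun c => (edges c).+1) l) end.

(* a vertex is a leaf when it has no children (only used for non-root vertices) *)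
Definition is_leaf (t : ptree) : bool :=
  match t with Node l => nilp l end.

(* Old leaves: leaves that are the leftmost child of their parent.
   The root is never counted (single-vertex tree has no leaves). *)
Fixpoint old_leaves (t : ptree) : nat :=
  match t with
  | Node l =>
      (match l with c :: _ => is_leaf c | [::] => false end)
      + sumn (map old_leaves l)
  end.

Fixpoint young_leaves (t : ptree) : nat :=
  match t with
  | Node l =>
      (match l with _ :: r => count is_leaf r | [::] => 0 end)
      + sumn (map young_leaves l)
  end.

(* Main.v *)
Require Import Defs.
From mathcomp Require Import all_boot.
From Stdlib Require List.
From mathcomp Require Import zify.
From mathcomp Require Import all_algebra ring.
Set Implicit Arguments. Unset Strict Implicit. Unset Printing Implicit Defensive.


Definition leaf := Node [::].

Inductive G : seq nat -> ptree -> Prop :=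
| gY : G [:: 0] (Node [:: leaf])
| gU w t : G w t -> G (1 :: w) (Node [:: t])
| gZ w l : G w (Node l) -> G (2 :: w) (Node (rcons l leaf))
| gB w1 l w2 t : G w1 (Node l) -> G w2 t -> G (3 :: w1 ++ w2) (Node (rcons l t)).

Definition cnt (a : nat) (w : seq nat) := count (pred1 a) w.

Lemma edges_rcons l t : edges (Node (rcons l t)) = edges (Node l) + (edges t).+1.
Proof. by rewrite /= map_rcons sumn_rcons. Qed.

Lemma old_rcons l t : 0 < size l ->
  old_leaves (Node (rcons l t)) = old_leaves (Node l) + old_leaves t.
Proof. case: l => [|c l] //= _; rewrite map_rcons sumn_rcons; lia. Qed.

Lemma young_rcons l t : 0 < size l ->
  young_leaves (Node (rcons l t)) = young_leaves (Node l) + is_leaf t + young_leaves t.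
Proof.
case: l => [|c l] //= _; rewrite map_rcons sumn_rcons -cats1 count_cat /=; lia.
Qed.

Lemma G_size w t : G w t -> 0 < size w.
Proof. by case. Qed.

Lemma G_stats w t : G w t ->
  [/\ edges t = size w, old_leaves t = cnt 0 w, young_leaves t = cnt 2 w,
      cnt 0 w = (cnt 3 w).+1 & all (fun a => a < 4) w].
Proof.
elim=> {w t}; first by [].
- move=> w t Hw [He Ho Hy Hc Ha]; rewrite /cnt /= in Hc Ho Hy *.
  have Hs := G_size Hw.
  have: is_leaf t = false by case: t He {Hw Ho Hy} => [[|? ?]] //= He; exfalso; lia.
  move=> ->; rewrite /= Ha; split; lia.
- move=> w l Hw [He Ho Hy Hc Ha].
  have Hs := G_size Hw.
  have Hl : 0 < size l by case: l He {Hw Ho Hy} => //= He; exfalso; lia.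
  rewrite edges_rcons old_rcons // young_rcons // /cnt /= in Ho Hy Hc *.
  move: He => /= He; split; lia.
- move=> w1 l w2 t Hw1 [He Ho Hy Hc Ha] Hw2 [He2 Ho2 Hy2 Hc2 Ha2].
  have Hs := G_size Hw1. have Hs2 := G_size Hw2.
  have Hl : 0 < size l by case: l He {Hw1 Ho Hy} => //= He; exfalso; lia.
  have Ht : is_leaf t = false by case: t He2 {Hw2 Ho2 Hy2} => [[|? ?]] //= He2; exfalso; lia.
  rewrite edges_rcons old_rcons // young_rcons // Ht He Ho Hy He2 Ho2 Hy2.
  rewrite /cnt /= size_cat !count_cat all_cat Ha Ha2 /cnt in Hc Hc2 *; split; lia.
Qed.

Lemma G_edges w t : G w t -> 0 < edges t.
Proof. by move=> H; case: (G_stats H) => -> *; apply: G_size H. Qed.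

Lemma G_nonleaf w t : G w t -> is_leaf t = false.
Proof. by move=> H; have := G_edges H; case: t {H} => [[|? ?]]. Qed.

Lemma G_sizel w l : G w (Node l) -> 0 < size l.
Proof. by move=> H; have := G_edges H; case: l {H}. Qed.

Lemma edges_pos l : 0 < size l -> 0 < edges (Node l).
Proof. by case: l. Qed.

Definition shape (t : ptree) : nat :=
  match t with
  | Node [:: c] => if is_leaf c then 0 else 1
  | Node l => if is_leaf (last leaf l) then 2 else 3
  end.

Lemma shape_rcons l c : 0 < size l -> shape (Node (rcons l c)) = if is_leaf c then 2 else 3.
Proof. by case: l => [|a [|b l]] //= _; rewrite last_rcons. Qed.

Lemma G_shape w t : G w t -> head 0 w = shape t.
Proof.
case=> //.
- by move=> w0 t0 H; rewrite /= (G_nonleaf H).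
- by move=> w0 l H; rewrite shape_rcons // (G_sizel H).
- by move=> w1 l w2 t0 H1 H2; rewrite shape_rcons ?(G_sizel H1) // (G_nonleaf H2).
Qed.

Lemma G_inj w1 t : G w1 t -> forall w2, G w2 t -> w1 = w2.
Proof.
elim=> {w1 t}.
- move=> w2 H2; have E := G_shape H2; move: E => /= E.
  inversion H2; subst => //; simpl in E; discriminate.
- move=> w t Hw IH w2 H2; have E := G_shape H2; move: E => /=; rewrite (G_nonleaf Hw) => E.
  inversion H2; subst => //; simpl in E; try discriminate.
  by erewrite IH; last eassumption.
- move=> w l Hw IH w2 H2; have E := G_shape H2; rewrite shape_rcons ?(G_sizel Hw) // in E.
  inversion H2; subst => //; simpl in E; try discriminate.
  case: (rcons_inj H) => E'; subst; by rewrite (IH _ H1).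
- move=> w1 l w2 t Hw1 IH1 Hw2 IH2 w3 H3; have E := G_shape H3.
  rewrite shape_rcons ?(G_sizel Hw1) // (G_nonleaf Hw2) in E.
  inversion H3; subst => //; simpl in E; try discriminate.
  case: (rcons_inj H) => E1 E2; subst; by rewrite (IH1 _ H0) (IH2 _ H2).
Qed.

Lemma G_ex t : 0 < edges t -> exists w, G w t.
Proof.
have: edges t < (edges t).+1 by []. move: {2}(edges t).+1 => n.
elim: n t => [//|n IH] [l] Hn Hp.
case/lastP: l Hn Hp => [//|l c]; rewrite edges_rcons => Hn Hp.
case: l Hn Hp => [|a l] Hn Hp.
- case: c Hn Hp => [[|b cl]] Hn Hp; first by exists [:: 0]; exact: gY.
  have [w Hw] : exists w, G w (Node (b :: cl)) by apply: IH => //=; lia.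
  by exists (1 :: w); exact: gU.
- have [w Hw] : exists w, G w (Node (a :: l)).
    by apply: IH; [move: Hn; rewrite /=; lia | apply: edges_pos].
  case: c Hn Hp => [[|b cl]] Hn Hp; first by exists (2 :: w); exact: gZ.
  have [w' Hw'] : exists w, G w (Node (b :: cl)) by apply: IH => //=; move: Hn => /=; lia.
  by exists (3 :: w ++ w'); exact: gB.
Qed.

Definition ar (a : nat) : nat := match a with 0 => 0 | 1 => 1 | 2 => 1 | _ => 2 end.

Fixpoint ok (k : nat) (w : seq nat) : bool :=
  match w with
  | [::] => k == 0
  | a :: r => [&& a < 4, 0 < k & ok (k.-1 + ar a) r]
  end.

Lemma G_ok w t : G w t -> forall k r, ok k.+1 (w ++ r) = ok k r.
Proof.
elim=> {w t} /=.
- by move=> k r; rewrite addn0.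
- by move=> w t _ IH k r; rewrite addn1 IH.
- by move=> w l _ IH k r; rewrite addn1 IH.
- by move=> w1 l w2 t _ IH1 _ IH2 k r; rewrite addn2 -catA IH1 IH2.
Qed.

Inductive Gs : nat -> seq nat -> Prop :=
| gs0 : Gs 0 [::]
| gsS k w1 t w2 : G w1 t -> Gs k w2 -> Gs k.+1 (w1 ++ w2).

Lemma Gs_split m k w : Gs (m + k) w -> exists w1 w2, [/\ w = w1 ++ w2, Gs m w1 & Gs k w2].
Proof.
elim: m w => [|m IH] w H; first by exists [::], w; split => //; exact: gs0.
inversion H as [|k' u t v Hu Hv Ek Ew]; subst.
have [v1 [v2 [E H1 H2]]] := IH _ Hv.
by exists (u ++ v1), v2; split; [rewrite E catA | apply: gsS Hu H1 |].
Qed.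

Lemma Gs1 w : Gs 1 w -> exists t, G w t.
Proof. move=> H; inversion H; subst. inversion H2; subst. by exists t; rewrite cats0. Qed.

Lemma ok_Gs w k : ok k w -> Gs k w.
Proof.
elim: w k => [|a r IH] k /=; first by move/eqP->; exact: gs0.
case/and3P=> Ha Hk /IH Hr.
case: k Hk Hr => [//|k] _ /=.
case: a Ha => [|[|[|[|a]]]] //= _ Hr.
- by rewrite addn0 in Hr; apply: (gsS (w1 := [:: 0])) Hr; exact: gY.
- rewrite addn1 -[k.+1]add1n in Hr.
  have [w1 [w2 [-> /Gs1 [t H1] H2]]] := Gs_split Hr.
  by apply: (gsS (w1 := 1 :: w1)) H2; apply: gU H1.
- rewrite addn1 -[k.+1]add1n in Hr.
  have [w1 [w2 [-> /Gs1 [[l] H1] H2]]] := Gs_split Hr.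
  by apply: (gsS (w1 := 2 :: w1)) H2; apply: gZ H1.
- rewrite addn2 -[k.+2]add1n -[k.+1]add1n in Hr.
  have [w1 [w2' [-> /Gs1 [[l] H1] H2]]] := Gs_split Hr.
  have [w2 [w3 [-> /Gs1 [t H3] H4]]] := Gs_split H2.
  rewrite catA -cat_cons.
  by apply: (gsS (w1 := 3 :: w1 ++ w2)) H4; apply: gB H1 H3.
Qed.

Lemma ok_G w : ok 1 w -> exists t, G w t.
Proof. by move/ok_Gs/Gs1. Qed.

Lemma G_ok1 w t : G w t -> ok 1 w.
Proof. by move=> H; rewrite -[w]cats0 (G_ok H). Qed.

Lemma okP k w : all (fun a => a < 4) w ->
  ok k w <-> ((forall m, m < size w -> m < k + sumn (take m (map ar w)))
              /\ k + sumn (map ar w) = size w).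
Proof.
elim: w k => [|a r IH] k /=.
  move=> _; split; first by move/eqP => ->.
  by case=> _ H; apply/eqP; lia.
case/andP=> Ha Hr; rewrite Ha /=.
split.
- case/andP=> Hk /(IH _ Hr) [H1 H2]; split; last by lia.
  case=> [|m] /= Hm; first by lia.
  have := H1 m Hm; lia.
- case=> H1 H2.
  have Hk : 0 < k by have := H1 0 erefl; rewrite /= addn0.
  rewrite Hk /=; apply/(IH _ Hr); split; last by lia.
  move=> m Hm; have := H1 m.+1 Hm; rewrite /=; lia.
Qed.

Section Cycle.
Variable v : seq nat.
Local Notation N := (size v).
Local Notation A m := (sumn (take m v)).

Definition luk (u : seq nat) :=
  (forall m, m < size u -> m < 1 + sumn (take m u)) /\ 1 + sumn u = size u.

Lemma A_add r m : A (r + m) = A r + sumn (take m (drop r v)).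
Proof. by rewrite takeD sumn_cat. Qed.

Lemma sum_rot r m : r <= N -> m <= N ->
  sumn (take m (rot r v)) + A r =
  if m <= N - r then A (r + m) else A N + A (m - (N - r)).
Proof.
move=> Hr Hm; rewrite /rot take_cat size_drop.
have HAN : A N = sumn (drop r v) + A r by rewrite take_size -{1}(cat_take_drop r v) sumn_cat addnC.
case: ltnP => H1.
- have -> : m <= N - r by lia.
  by rewrite A_add addnC.
- case: leqP => H2.
  + have -> : m = N - r by lia.
    by rewrite subnn take0 cats0 subnKC // HAN.
  + rewrite sumn_cat take_takel ?HAN; last by lia.
    lia.
Qed.

Definition good r :=
  (forall k, r <= k -> k < N -> A r + k <= A k + r) /\
  (forall k, k < r -> A r + k < A k + r).

Lemma luk_good r : 1 + sumn v = N -> r < N -> (luk (rot r v) <-> good r).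
Proof.
move=> Hs Hr.
have AN : A N = sumn v by rewrite take_size.
have A0 : A 0 = 0 by rewrite take0.
split.
- case=> H _; split.
  + move=> k Hrk HkN.
    have := H (k - r); rewrite size_rot => /(_ ltac:(lia)).
    have := sum_rot (r := r) (m := k - r) ltac:(lia) ltac:(lia).
    have -> : k - r <= N - r by lia.
    have -> : r + (k - r) = k by lia.
    lia.
  + move=> k Hkr.
    have := H (N - r + k); rewrite size_rot => /(_ ltac:(lia)).
    have := sum_rot (r := r) (m := N - r + k) ltac:(lia) ltac:(lia).
    case: ifP => Hc.
    * have Ek : k = 0 by lia.
      subst k; rewrite addn0 subnKC ?AN; lia.
    * have -> : N - r + k - (N - r) = k by lia.
      lia.
- case=> G1 G2; split; last by rewrite size_rot sumn_rot.
  move=> m; rewrite size_rot => Hm.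
  have := sum_rot (r := r) (m := m) ltac:(lia) ltac:(lia).
  case: ifP => Hc.
  + case: (ltnP (r + m) N) => Hrm.
    * have := G1 (r + m) ltac:(lia) Hrm; lia.
    * have Em : r + m = N by lia.
      rewrite Em AN.
      have := G2 0 ltac:(lia); rewrite A0; lia.
  + have := G2 (m - (N - r)) ltac:(lia); lia.
Qed.

Lemma good_uniq r1 r2 : good r1 -> good r2 -> r1 < N -> r2 < N -> r1 = r2.
Proof.
move=> [G1 G2] [H1 H2] L1 L2.
case: (ltngtP r1 r2) => // Hc.
- have := G1 r2 ltac:(lia) L2; have := H2 r1 Hc; lia.
- have := H1 r1 ltac:(lia) L1; have := G2 r2 Hc; lia.
Qed.

Lemma good_ex : 0 < N -> exists r, r < N /\ good r.
Proof.
move=> HN.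
pose i0 : 'I_N := Ordinal HN.
pose F (i : 'I_N) := A i + N - i.
have [im _ Him] := arg_minnP F (P := predT) (i0 := i0) isT.
have Ex : exists r, (r < N) && [forall k : 'I_N, A r + k <= A k + r].
  exists im; rewrite ltn_ord /=; apply/forallP => k.
  have := Him k isT; rewrite /F.
  have := ltn_ord im; have := ltn_ord k; lia.
case: (ex_minnP Ex) => r /andP [Hr /forallP Hall] Hmin.
exists r; split => //; split.
- move=> k _ Hk; exact: (Hall (Ordinal Hk)).
- move=> k Hkr; rewrite ltnNge; apply/negP => Hle.
  have : r <= k.
    apply: Hmin; rewrite (ltn_trans Hkr Hr) /=; apply/forallP => j.
    have := Hall j; lia.
  lia.
Qed.

End Cycle.

Lemma sum_tupleS n (F : n.+1.-tuple 'I_4 -> nat) :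
  \sum_(w : n.+1.-tuple 'I_4) F w =
  \sum_(a : 'I_4) \sum_(w : n.-tuple 'I_4) F (cons_tuple a w).
Proof.
rewrite pair_big /=.
rewrite (reindex (fun p : 'I_4 * n.-tuple 'I_4 => cons_tuple p.1 p.2)) //=.
apply: onW_bij.
exists (fun w : n.+1.-tuple 'I_4 => (thead w, behead_tuple w)).
- by case=> a w /=; rewrite theadE; congr pair; apply: val_inj.
- by move=> w; rewrite [w in RHS]tuple_eta; apply: val_inj.
Qed.

Definition vw n (w : n.-tuple 'I_4) : seq nat := map (@nat_of_ord 4) w.

Definition M4 n i j b c :=
  \sum_(w : n.-tuple 'I_4)
    [&& cnt 0 (vw w) == i, cnt 1 (vw w) == b, cnt 2 (vw w) == j & cnt 3 (vw w) == c].

Lemma M4_0 i j b c : M4 0 i j b c = [&& i == 0, b == 0, j == 0 & c == 0].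
Proof.
rewrite /M4 (big_pred1 [tuple]); last by move=> w; apply/esym/eqP; exact: tuple0.
by rewrite /vw /cnt /= !(eq_sym 0).
Qed.

Lemma M4_S n i j b c : M4 n.+1 i j b c =
  (if i is i'.+1 then M4 n i' j b c else 0) + (if b is b'.+1 then M4 n i j b' c else 0) +
  (if j is j'.+1 then M4 n i j' b c else 0) + (if c is c'.+1 then M4 n i j b c' else 0).
Proof.
rewrite /M4 sum_tupleS !big_ord_recl big_ord0 addn0 /=.
rewrite !addnA; congr (_ + _ + _ + _); [case: i => [|k]|case: b => [|k]|case: j => [|k]|case: c => [|k]].
all:
  first [ by rewrite big1 // => w _; rewrite !add0n add1n /= ?andbF
        | by apply: eq_bigr => w _; rewrite !add0n add1n eqSS ].
Qed.

Lemma M4_fact n i j b c :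
  M4 n i j b c * (i`! * j`! * b`! * c`!) = (i + j + b + c == n) * n`!.
Proof.
elim: n i j b c => [|n IH] i j b c.
  rewrite M4_0; case E: [&& i == 0, b == 0, j == 0 & c == 0].
  - by case/and4P: E => /eqP-> /eqP-> /eqP-> /eqP->.
  - rewrite mul0n; case: eqP => //= H; move: E.
    by have [-> -> -> ->] : [/\ i = 0, b = 0, j = 0 & c = 0] by split; lia.
have Ti : (if i is i'.+1 then M4 n i' j b c else 0) * (i`! * j`! * b`! * c`!) = i * ((i + j + b + c == n.+1) * n`!).
  case: i => [|i]; first by rewrite !mul0n.
  rewrite factS.
  have -> : M4 n i j b c * (i.+1 * i`! * j`! * b`! * c`!) =
            i.+1 * (M4 n i j b c * (i`! * j`! * b`! * c`!)) by ring.
  by rewrite IH (_ : i.+1 + j + b + c = (i + j + b + c).+1) ?eqSS //; lia.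
have Tb : (if b is b'.+1 then M4 n i j b' c else 0) * (i`! * j`! * b`! * c`!) = b * ((i + j + b + c == n.+1) * n`!).
  case: b Ti => [|b] _; first by rewrite !mul0n.
  rewrite factS.
  have -> : M4 n i j b c * (i`! * j`! * (b.+1 * b`!) * c`!) =
            b.+1 * (M4 n i j b c * (i`! * j`! * b`! * c`!)) by ring.
  by rewrite IH (_ : i + j + b.+1 + c = (i + j + b + c).+1) ?eqSS //; lia.
have Tj : (if j is j'.+1 then M4 n i j' b c else 0) * (i`! * j`! * b`! * c`!) = j * ((i + j + b + c == n.+1) * n`!).
  case: j Ti Tb => [|j] _ _; first by rewrite !mul0n.
  rewrite factS.
  have -> : M4 n i j b c * (i`! * (j.+1 * j`!) * b`! * c`!) =
            j.+1 * (M4 n i j b c * (i`! * j`! * b`! * c`!)) by ring.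
  by rewrite IH (_ : i + j.+1 + b + c = (i + j + b + c).+1) ?eqSS //; lia.
have Tc : (if c is c'.+1 then M4 n i j b c' else 0) * (i`! * j`! * b`! * c`!) = c * ((i + j + b + c == n.+1) * n`!).
  case: c Ti Tb Tj => [|c] _ _ _; first by rewrite !mul0n.
  rewrite factS.
  have -> : M4 n i j b c * (i`! * j`! * b`! * (c.+1 * c`!)) =
            c.+1 * (M4 n i j b c * (i`! * j`! * b`! * c`!)) by ring.
  by rewrite IH (_ : i + j + b + c.+1 = (i + j + b + c).+1) ?eqSS //; lia.
rewrite M4_S !mulnDl Ti Tb Tj Tc -!mulnDl.
case: eqP => H; last by rewrite !muln0.
by rewrite !mul1n factS -H; congr (_ * _); lia.
Qed.

Lemma cnt_size (w : seq nat) : all (fun a => a < 4) w ->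
  size w = cnt 0 w + cnt 1 w + cnt 2 w + cnt 3 w /\
  sumn (map ar w) = cnt 1 w + cnt 2 w + 2 * cnt 3 w.
Proof.
elim: w => [|a w IH] //= /andP [Ha /IH [H1 H2]].
rewrite /cnt /= in H1 H2 *.
case: a Ha => [|[|[|[|a]]]] //= _; lia.
Qed.

Lemma vw_all n (w : n.-tuple 'I_4) : all (fun a => a < 4) (vw w).
Proof. by apply/allP => x /mapP [y _ ->]; exact: ltn_ord. Qed.

Lemma size_vw n (w : n.-tuple 'I_4) : size (vw w) = n.
Proof. by rewrite size_map size_tuple. Qed.

Lemma cnt_rot a r (w : seq nat) : cnt a (rot r w) = cnt a w.
Proof. by rewrite /cnt /rot count_cat addnC -count_cat cat_take_drop. Qed.

Lemma all_rot (p : pred nat) r (w : seq nat) : all p (rot r w) = all p w.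
Proof. by rewrite /rot all_cat andbC -all_cat cat_take_drop. Qed.

Lemma ok_luk r (w : seq nat) : all (fun a => a < 4) w ->
  ok 1 (rot r w) <-> luk (rot r (map ar w)).
Proof.
move=> Ha; rewrite okP; last by rewrite all_rot.
rewrite /luk (map_rot r ar w) !size_rot size_map.
by [].
Qed.

Lemma sum_rot_ok (w : seq nat) : all (fun a => a < 4) w -> 0 < size w ->
  1 + sumn (map ar w) = size w -> \sum_(r < size w) ok 1 (rot r w) = 1.
Proof.
move=> Ha Hp Hs.
set v := map ar w.
have Hv : size v = size w by rewrite size_map.
have [r0 [Hr0 Hg]] := good_ex (v := v) ltac:(lia).
have Hr0' : r0 < size w by rewrite -Hv.
have key : forall r : 'I_(size w), ok 1 (rot r w) = (r == Ordinal Hr0').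
  move=> r.
  have Hs' : 1 + sumn v = size v by rewrite Hv.
  have Hr : r < size v by rewrite Hv.
  apply/idP/eqP.
  - move/(ok_luk _ Ha); rewrite -/v => /(luk_good Hs' Hr) Hgr.
    by apply: val_inj => /=; apply: (good_uniq Hgr Hg).
  - move=> -> /=; apply/(ok_luk _ Ha); rewrite -/v; apply/(luk_good Hs' Hr0); exact: Hg.
rewrite (eq_bigr (fun r : 'I_(size w) => ((r == Ordinal Hr0') : nat))); last by move=> r _; rewrite key.
rewrite (bigD1 (Ordinal Hr0')) //= eqxx big1 // => r /negbTE -> //.
Qed.

Definition P (i j : nat) n (w : n.-tuple 'I_4) : bool :=
  [&& cnt 0 (vw w) == i, cnt 2 (vw w) == j & cnt 3 (vw w) == i.-1].

Lemma P_sum i j n (w : n.-tuple 'I_4) : 0 < i -> P i j w -> 1 + sumn (map ar (vw w)) = n.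
Proof.
move=> Hi /and3P [/eqP H0 /eqP H2 /eqP H3].
have [Hs Ha] := cnt_size (vw_all w); rewrite size_vw in Hs; lia.
Qed.

Lemma rot_tuple_inj n r : injective (@rot_tuple n r 'I_4).
Proof. by move=> x y /(congr1 val) /rot_inj /val_inj. Qed.

Lemma vw_rot n r (w : n.-tuple 'I_4) : vw (rot_tuple r w) = rot r (vw w).
Proof. exact: map_rot. Qed.

Lemma count_main n i j : 0 < n -> 0 < i ->
  n * \sum_(w : n.-tuple 'I_4) (P i j w && ok 1 (vw w)) = \sum_(w : n.-tuple 'I_4) P i j w.
Proof.
move=> Hn Hi.
transitivity (\sum_(w : n.-tuple 'I_4) \sum_(r < n) (P i j w && ok 1 (rot r (vw w)))); last first.
  apply: eq_bigr => w _.
  case HP: (P i j w) => /=; last by rewrite big1.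
  have := sum_rot_ok (vw_all w); rewrite size_vw => -> //.
  exact: P_sum HP.
rewrite exchange_big /=.
rewrite [RHS](eq_bigr (fun _ => \sum_(w : n.-tuple 'I_4) (P i j w && ok 1 (vw w)))).
  by rewrite big_const_ord iter_addn_0 mulnC.
move=> r _.
rewrite [RHS](reindex_inj (@rot_tuple_inj n r)) /=.
apply: eq_bigr => w _.
by rewrite vw_rot /P vw_rot !cnt_rot.
Qed.

Lemma sum_count (T : finType) (Q : pred T) :
  \sum_(w : T) (Q w : nat) = count Q (index_enum T).
Proof. by rewrite -sum1_count [RHS]big_mkcond; apply: eq_bigr => w _; case: (Q w). Qed.

Lemma sumP_M4 n i j :
  \sum_(w : n.-tuple 'I_4) P i j w = M4 n i j (n - i - j - i.-1) i.-1.
Proof.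
apply: eq_bigr => w _; congr (nat_of_bool _).
have [Hs _] := cnt_size (vw_all w); rewrite size_vw in Hs.
rewrite /P; apply/idP/idP.
- by case/and3P => /eqP a /eqP b /eqP c; apply/and4P; split; apply/eqP; lia.
- by case/and4P => /eqP a /eqP b /eqP c /eqP d; apply/and3P; split; apply/eqP; lia.
Qed.

Lemma M4_binom n i j : 0 < i ->
  M4 n i j (n - i - j - i.-1) i.-1 = 'C(n, i) * 'C(n - i, j) * 'C(n - i - j, i - 1).
Proof.
move=> Hi; rewrite subn1; set c := i.-1; set b := n - i - j - c.
have F := M4_fact n i j b c.
have Hpos : 0 < i`! * j`! * b`! * c`! by rewrite !muln_gt0 !fact_gt0.
case: (leqP (i + j + c) n) => H.
- have Ht : (i + j + b + c == n) = true by apply/eqP; rewrite /b; lia.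
  rewrite Ht mul1n in F.
  apply/eqP; rewrite -(eqn_pmul2r Hpos) F; apply/eqP.
  have e1 := bin_fact (n := n) (m := i) ltac:(lia).
  have e2 := bin_fact (n := n - i) (m := j) ltac:(lia).
  have e3 := bin_fact (n := n - i - j) (m := c) ltac:(lia).
  rewrite -e1 -e2 -e3 /b; ring.
- have Hz : i + j + b + c == n = false by apply/negbTE/eqP; rewrite /b; lia.
  rewrite Hz mul0n in F.
  move/eqP: F; rewrite muln_eq0 => /orP [/eqP -> | ]; last by rewrite eqn0Ngt Hpos.
  case: (ltnP n i) => H1; first by rewrite bin_small.
  case: (ltnP (n - i) j) => H2; first by rewrite (bin_small H2) muln0.
  by rewrite (@bin_small (n - i - j) c) ?muln0 //; lia.
Qed.

Lemma mk_tuple n (w' : seq nat) : size w' = n -> all (fun a => a < 4) w' ->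
  exists x : n.-tuple 'I_4, vw x = w'.
Proof.
move=> Hs Ha.
have Hs' : size (map (@inord 3) w') == n by rewrite size_map Hs.
exists (Tuple Hs'); rewrite /vw /= -map_comp.
by apply: map_id_in => a /(allP Ha) Ha'; apply: inordK.
Qed.

Lemma G_prefix1 u1 t1 u2 t2 r1 r2 : G u1 t1 -> G u2 t2 -> u1 ++ r1 = u2 ++ r2 ->
  size u1 <= size u2 -> u1 = u2.
Proof.
move=> H1 H2 E Hs.
have Et : take (size u1) u2 = u1.
  by have := congr1 (take (size u1)) E; rewrite take_size_cat // takel_cat.
have Eu : u2 = u1 ++ drop (size u1) u2 by rewrite -{1}Et cat_take_drop.
case Ed: (drop (size u1) u2) => [|a m]; first by rewrite Eu Ed cats0.
by have := G_ok1 H2; rewrite Eu (G_ok H1) Ed /= andbF.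
Qed.

Lemma G_prefix u1 t1 u2 t2 r1 r2 : G u1 t1 -> G u2 t2 -> u1 ++ r1 = u2 ++ r2 ->
  u1 = u2 /\ r1 = r2.
Proof.
move=> H1 H2 E.
have Eu : u1 = u2.
  case: (leqP (size u1) (size u2)) => Hs; first exact: G_prefix1 H1 H2 E Hs.
  by symmetry; apply: G_prefix1 H2 H1 (esym E) (ltnW Hs).
split => //; subst; have := congr1 (drop (size u2)) E; by rewrite !drop_size_cat.
Qed.

Lemma G_fun w t1 : G w t1 -> forall t2, G w t2 -> t1 = t2.
Proof.
elim=> {w t1}.
- by move=> t2 H2; inversion H2.
- move=> w t Hw IH t2 H2; inversion H2; subst; by rewrite (IH _ H0).
- move=> w l Hw IH t2 H2; inversion H2; subst.
  by have := IH _ H0; case=> ->.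
- move=> w1 l w2 t Hw1 IH1 Hw2 IH2 t3 H3; inversion H3; subst.
  have [E1 E2] := G_prefix H0 Hw1 H; subst.
  by have := IH1 _ H0; case=> ->; rewrite (IH2 _ H1).
Qed.

Lemma build n (L : seq (n.-tuple 'I_4)) :
  (forall x, x \in L -> exists t, G (vw x) t) ->
  exists s, (forall t, List.In t s <-> exists x, x \in L /\ G (vw x) t) /\
            size s = size L /\ (uniq L -> List.NoDup s).
Proof.
elim: L => [|x L IH] H.
  exists [::]; split; last by split => // _; constructor.
  by move=> t0; split => //= -[y []].
have [t Ht] := H x (mem_head _ _).
have H' : forall y, y \in L -> exists t, G (vw y) t.
  by move=> y Hy; apply: H; rewrite in_cons Hy orbT.
have [s [Hm [Hsz Hu]]] := IH H'.
exists (t :: s); split; last split.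
- move=> t0 /=; split.
  + case=> [<- | /Hm [y [Hy Hy']]]; first by exists x; rewrite mem_head.
    by exists y; rewrite in_cons Hy orbT.
  + case=> y []; rewrite in_cons => /orP [/eqP -> Hy | Hy Hy'].
    * by left; apply: (G_fun Ht).
    * by right; apply/Hm; exists y.
- by rewrite /= Hsz.
- case/andP => Hx HL; constructor; last exact: Hu.
  move/Hm => [y [Hy Hy']].
  have E : vw x = vw y := G_inj Ht Hy'.
  have : x = y by apply: val_inj; apply: (inj_map val_inj E).
  by move=> Exy; move: Hx; rewrite Exy Hy.
Qed.

Theorem mainTheorem2 (n i j : nat) (hn : 1 <= n) (hi : 1 <= i) :
  exists s : seq ptree,
    List.NoDup s /\
    (forall t : ptree,
        List.In t s <->
        (edges t = n /\ old_leaves t = i /\ young_leaves t = j)) /\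
    n * size s = 'C(n, i) * 'C(n - i, j) * 'C(n - i - j, i - 1).
Proof.
pose Q := fun w : n.-tuple 'I_4 => P i j w && ok 1 (vw w).
pose L := [seq w <- index_enum (n.-tuple 'I_4) | Q w].
have HL : forall x, x \in L -> exists t, G (vw x) t.
  by move=> x; rewrite mem_filter => /andP [/andP [_ Hok] _]; apply: ok_G.
have [s [Hm [Hsz Hu]]] := build HL.
exists s; split; last split.
- by apply: Hu; rewrite filter_uniq // index_enum_uniq.
- move=> t; rewrite Hm; split.
  + case=> x []; rewrite mem_filter => /andP [/andP [/and3P [/eqP H0 /eqP H2 _] _] _] Hx.
    have [He Ho Hy _ _] := G_stats Hx.
    by rewrite He Ho Hy size_vw.
  + case=> He [Ho Hy].
    have [w' Hw'] := G_ex (t := t) ltac:(lia).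
    have [He' Ho' Hy' Hc' Ha'] := G_stats Hw'.
    have [x Hx] := mk_tuple (n := n) (w' := w') ltac:(lia) Ha'.
    exists x; split; last by rewrite Hx.
    rewrite mem_filter mem_index_enum andbT /Q /P Hx (G_ok1 Hw') andbT.
    apply/and3P; split; apply/eqP; lia.
- rewrite Hsz size_filter -sum_count count_main // sumP_M4 M4_binom //.
Qed.
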